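(* Let $X$ be a finite set of cardinality $|X|$, let $x_1,\dots,x_K\in X$, and let $a_1,\dots,a_K:X\to[0,\infty)$ be functions such that $a_i(x_i)\ge a_{\min}>0$ for every $i$. Then $$\sum_{k=1}^K\frac{1}{\sum_{i\le k}a_i(x_k)}=\tilde O\!\left(\frac{|X|}{a_{\min}}\right),$$ where $\tilde O$ hides factors polylogarithmic in $K$. *)

(* Defs.v *)
From HB Require Import structures.
From mathcomp Require Import all_boot all_order all_algebra.
From mathcomp Require Import reals exp.

(* Main.v *)
Require Import Defs.
From HB Require Import structures.
From mathcomp Require Import all_boot all_order all_algebra.
From mathcomp Require Import reals exp.
Import Order.TTheory GRing.Theory Num.Theory.
Local Open Scope ring_scope.
Section H.
Variable R : realType.

Definition Hs (n : nat) : R := \sum_(j < n) (j.+1%:R)^-1.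

Lemma HsS n : Hs n.+1 = Hs n + (n.+1%:R)^-1.
Proof. by rewrite /Hs big_ord_recr. Qed.

Lemma Hs_mono m n : (m <= n)%N -> Hs m <= Hs n.
Proof.
elim: n => [|n IH]; first by rewrite leqn0 => /eqP->.
rewrite leq_eqVlt => /orP[/eqP->//|]; rewrite ltnS => /IH h.
by rewrite HsS (le_trans h) // lerDl invr_ge0.
Qed.

Lemma Hs_ln n : (1 <= n)%N -> Hs n <= 1 + ln (n%:R : R).
Proof.
elim: n => [//|n IH]; case: n IH => [_ _|n IH _].
  by rewrite /Hs big_ord1 ln1 addr0 invr1.
rewrite HsS; apply: le_trans (lerD (IH isT) (lexx _)) _; rewrite -addrA lerD2l.
have h := @le_ln1Dx R (- (n.+2%:R)^-1).
have p1 : (0 : R) < n.+1%:R by rewrite ltr0n.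
have p2 : (0 : R) < n.+2%:R by rewrite ltr0n.
have e : 1 + - (n.+2%:R : R)^-1 = n.+1%:R / n.+2%:R.
  apply: (mulIf (lt0r_neq0 p2)); rewrite mulrDl mulNr mulVf ?lt0r_neq0 //.
  rewrite mul1r -mulrA mulVf ?lt0r_neq0 // mulr1 -natr1 addrK //.
rewrite e ln_div ?posrE // in h.
rewrite -lerBrDl; rewrite -opprB lerNr; apply: h.
rewrite ltrNl opprK invf_lt1 // ltr1n //.
Qed.

End H.
Lemma L1 (R : realType) (X : finType) (f : nat -> X) K :
  \sum_(k < K) (((\sum_(i < k.+1) (f i == f k))%N)%:R : R)^-1
  = \sum_(y : X) Hs R (\sum_(i < K) (f i == y))%N.
Proof.
elim: K => [|K IH].
  by rewrite big_ord0; apply/esym/big1 => y _; rewrite big_ord0 /Hs big_ord0.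
rewrite big_ord_recr /= IH.
have -> : \sum_(y : X) Hs R (\sum_(i < K.+1) (f i == y))%N =
   \sum_(y : X) (Hs R (\sum_(i < K) (f i == y))%N +
     (if f K == y then ((\sum_(i < K) (f i == y))%N.+1%:R)^-1 else 0)).
  apply: eq_bigr => y _; rewrite big_ord_recr /=.
  by case: eqP => _; rewrite ?addn1 ?HsS ?addn0 ?addr0.
rewrite big_split /=; congr (_ + _).
rewrite -[RHS]big_mkcond /= (big_pred1 (f K)) => [|y]; last by rewrite /= eq_sym.
by rewrite big_ord_recr /= eqxx addn1.
Qed.

Lemma L3 (F : nat -> nat) K (k : 'I_K) :
  (\sum_(i < K | (i <= k)%N) F i = \sum_(i < k.+1) F i)%N.
Proof.
rewrite -(big_mkord (fun i => (i <= k)%N)) -(big_mkord xpredT).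
rewrite [RHS](@big_nat_widen _ _ _ 0 k.+1 K) ?(ltn_ord k) //.
Qed.
Theorem lemma18 (R : realType) :
  exists (C : R) (p : nat), 0 < C /\
  forall (X : finType) (K : nat) (x : 'I_K -> X) (a : 'I_K -> X -> R)
         (amin : R),
    0 < amin ->
    (forall i y, 0 <= a i y) ->
    (forall i, amin <= a i (x i)) ->
    \sum_(k < K) (\sum_(i < K | (i <= k)%N) a i (x k))^-1
      <= C * (#|X|%:R / amin) * (1 + ln (K%:R : R)) ^+ p.
Proof.
exists 1, 1%N; split => // X K x a amin am0 a0 ax.
rewrite mul1r expr1.
case: K x a a0 ax => [|K] x a a0 ax.
  rewrite big_ord0 ln0 ?addr0 ?mulr1 ?divr_ge0 // ?ler0n // ltW //.
set f := fun n => x (inord n).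
have fx (i : 'I_K.+1) : f i = x i by rewrite /f inord_val.
set c := fun k : 'I_K.+1 => (\sum_(i < k.+1) (f i == f k))%N.
have cpos (k : 'I_K.+1) : (0 < c k)%N.
  by rewrite /c big_ord_recr /= eqxx addn1.
apply: (@le_trans _ _ (\sum_(k < K.+1) (amin^-1 * ((c k)%:R)^-1))).
  apply: ler_sum => k _.
  have ck : (c k)%:R * amin <= \sum_(i < K.+1 | (i <= k)%N) a i (x k).
    rewrite /c -(L3 (fun i => f i == f k)) natr_sum mulr_suml.
    apply: ler_sum => i _; rewrite !fx.
    case: eqP => [<-|_]; first by rewrite mul1r ax.
    by rewrite mul0r a0.
  have cp : 0 < (c k)%:R * amin by rewrite mulr_gt0 // ltr0n.
  rewrite -invfM mulrC lef_pV2 ?posrE //; exact: lt_le_trans ck.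
rewrite -mulr_sumr (L1 R X f K.+1) [#|X|%:R / amin]mulrC -mulrA ler_pM2l ?invr_gt0 //.
rewrite mulr_natl -sumr_const. apply: ler_sum => y _.
apply: le_trans (@Hs_ln R K.+1 isT).
apply: Hs_mono; apply: (@leq_trans (\sum_(i < K.+1) 1)%N).
  by apply: leq_sum => i _; exact: leq_b1.
by rewrite sum1_card card_ord.
Qed.
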